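(* Let $S$ be a finite semigroup. The congruence $\equiv_{\mathsf{RM}}$ equals the intersection of the congruences $\equiv_{\mathsf{RM},J}$ as $J$ runs over the $\mathsf{RM}$-irreducible regular $\mathscr J$-classes of $S$. Moreover, no $\mathsf{RM}$-irreducible regular $\mathscr J$-class $J$ can be omitted from this intersection without changing the resulting congruence.
   Context: $\mathscr J$-classes are ordered by $J'\le J$ iff $S^1J'S^1\subseteq S^1JS^1$; regular means containing an idempotent. For a regular $\mathscr J$-class $J$: $s\equiv_{\mathsf{RM},J}t$ iff for all $x\in J$, $xs\in J\iff xt\in J$, and if both lie in $J$ then $xs=xt$; $\equiv_{\mathsf{RM}}=\bigcap_J\equiv_{\mathsf{RM},J}$ over all regular $J$. A regular $J$ is $\mathsf{RM}$-irreducible if $\bigcap_{J'<J}\equiv_{\mathsf{RM},J'}\not\subseteq\equiv_{\mathsf{RM},J}$ (over regular $J'<J$; the empty intersection is the universal relation). *)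

(* Defs.v *)
From mathcomp Require Import all_boot.
Set Implicit Arguments. Unset Strict Implicit. Unset Printing Implicit Defensive.

Section Semigroup.
Variables (T : finType) (mul : T -> T -> T).

(* Multiplication by elements of S^1 = S + {1}; None plays the role of 1. *)
Definition lmul1 (u : option T) (a : T) : T :=
  if u is Some u' then mul u' a else a.
Definition rmul1 (a : T) (v : option T) : T :=
  if v is Some v' then mul a v' else a.

Definition ideal (A : {set T}) : {set T} :=
  [set x | [exists a in A, exists u : option T, exists v : option T,
             x == rmul1 (lmul1 u a) v]].

Definition jeq (x y : T) : bool := ideal [set x] == ideal [set y].
Definition jclass (x : T) : {set T} := [set y | jeq x y].
Definition is_jclass (J : {set T}) : bool := [exists x, J == jclass x].

Definition regular_jclass (J : {set T}) : bool :=
  is_jclass J && [exists e in J, mul e e == e].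

Definition jle (J' J : {set T}) : bool := ideal J' \subset ideal J.
Definition jlt (J' J : {set T}) : bool := jle J' J && (J' != J).

Definition rm_rel (J : {set T}) (s t : T) : bool :=
  [forall x in J, ((mul x s \in J) == (mul x t \in J))
                  && ((mul x s \in J) ==> (mul x s == mul x t))].

Definition rm (s t : T) : bool :=
  [forall J : {set T}, regular_jclass J ==> rm_rel J s t].

Definition rm_irreducible (J : {set T}) : bool :=
  regular_jclass J &&
  [exists s, exists t,
     [forall J' : {set T}, (regular_jclass J' && jlt J' J) ==> rm_rel J' s t]
     && ~~ rm_rel J s t].

End Semigroup.

(* Main.v *)
Require Import Defs.
From mathcomp Require Import all_boot.
Set Implicit Arguments. Unset Strict Implicit. Unset Printing Implicit Defensive.

Section Aux.
Variables (T : finType) (mul : T -> T -> T).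
Hypothesis mulA : associative mul.

Definition le x y := x \in ideal mul [set y].

Lemma leP x y : reflect (exists u v, x = rmul1 mul (lmul1 mul u y) v) (le x y).
Proof.
rewrite /le /ideal inE; apply: (iffP idP).
- case/existsP => a /andP[]; rewrite inE => /eqP -> /existsP[u /existsP[v /eqP ->]].
  by exists u, v.
- case=> u [v ->]; apply/existsP; exists y; rewrite inE eqxx /=.
  apply/existsP; exists u; apply/existsP; exists v; exact: eqxx.
Qed.

Lemma inidealP (A : {set T}) x : reflect (exists2 a, a \in A & le x a) (x \in ideal mul A).
Proof.
rewrite /le /ideal inE; apply: (iffP idP).
- case/existsP => a /andP[aA H]; exists a => //; rewrite inE.
  by apply/existsP; exists a; rewrite inE eqxx.
- case=> a aA; rewrite inE => /existsP[b /andP[]]; rewrite inE => /eqP -> H.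
  by apply/existsP; exists a; rewrite aA.
Qed.

Lemma le_refl x : le x x.
Proof. by apply/leP; exists None, None. Qed.

Definition omul (u v : option T) : option T :=
  match u, v with
  | Some a, Some b => Some (mul a b)
  | Some a, None => Some a
  | None, w => w
  end.

Lemma le_trans x y z : le x y -> le y z -> le x z.
Proof.
move=> /leP[u [v ->]] /leP[u' [v' ->]]; apply/leP.
exists (omul u u'), (omul v' v).
by case: u => [a|]; case: u' => [b|]; case: v => [c|]; case: v' => [d|];
  rewrite /= ?mulA.
Qed.

Lemma le_mull x y : le (mul x y) y.
Proof. by apply/leP; exists (Some x), None. Qed.
Lemma le_mulr x y : le (mul x y) x.
Proof. by apply/leP; exists None, (Some y). Qed.

Lemma ideal1_sub x y : (ideal mul [set x] \subset ideal mul [set y]) = le x y.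
Proof.
apply/subsetP/idP => [H|H z zx]; first exact: H (le_refl x).
exact: le_trans zx H.
Qed.

Lemma jeqE x y : jeq mul x y = le x y && le y x.
Proof. by rewrite /jeq eqEsubset !ideal1_sub. Qed.

Lemma in_jclass c z : (z \in jclass mul c) = le z c && le c z.
Proof. by rewrite inE jeqE andbC. Qed.

Lemma ideal_jclass c : ideal mul (jclass mul c) = ideal mul [set c].
Proof.
apply/setP=> w; apply/inidealP/idP.
- case=> a; rewrite in_jclass => /andP[ac _] wa; exact: le_trans wa ac.
- move=> wc; exists c => //; by rewrite in_jclass le_refl.
Qed.

Lemma jle_jclass c c' : jle mul (jclass mul c') (jclass mul c) = le c' c.
Proof. by rewrite /jle !ideal_jclass ideal1_sub. Qed.

Lemma up_jclass d p q : le p q -> le q d -> p \in jclass mul d -> q \in jclass mul d.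
Proof.
move=> pq qd; rewrite !in_jclass qd /= => /andP[_ dp]; exact: le_trans dp pq.
Qed.

Lemma regE J : regular_jclass mul J -> exists c, J = jclass mul c.
Proof. by case/andP => /existsP[c /eqP ->] _; exists c. Qed.

End Aux.
Arguments le_mulr {T mul} x y.
Arguments le_mull {T mul} x y.
Arguments le_trans {T mul} mulA {x y z}.

Theorem proposition2p3 (T : finType) (mul : T -> T -> T)
  (mulA : associative mul) :
  (forall s t : T,
     rm mul s t <->
     (forall J : {set T}, rm_irreducible mul J -> rm_rel mul J s t))
  /\
  (forall J0 : {set T}, rm_irreducible mul J0 ->
     exists s t : T,
       (forall J : {set T}, rm_irreducible mul J -> J != J0 -> rm_rel mul J s t)
       /\ ~~ rm_rel mul J0 s t).
Proof.
split.
  move=> s t; split.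
    move=> /forallP H J /andP[regJ _]; exact: (implyP (H J) regJ).
  move=> H; apply/forallP => J; apply/implyP.
  suff: forall n J, #|ideal mul J| < n -> regular_jclass mul J -> rm_rel mul J s t.
    by apply; apply: ltnSn.
  elim=> [//|n IH] {}J cJ regJ.
  case irr: (rm_irreducible mul J); first exact: H.
  move: irr; rewrite /rm_irreducible regJ /= => /negbT.
  rewrite negb_exists => /forallP /(_ s); rewrite negb_exists => /forallP /(_ t).
  rewrite negb_and negbK => /orP [|//].
  rewrite negb_forall => /existsP [J']; rewrite negb_imply.
  case/andP => /andP[regJ' /andP[jl neq]] nrel.
  have [c Jc] := regE regJ; have [c' Jc'] := regE regJ'.
  have pr : ideal mul J' \proper ideal mul J.
    rewrite properEneq; apply/andP; split; last exact: jl.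
    apply: contra neq; subst.
    rewrite !(ideal_jclass mulA) => /eqP E; apply/eqP; apply/setP => z; by rewrite !inE /jeq E.
  have := IH J' (leq_trans (proper_card pr) cJ) regJ'.
  by rewrite (negbTE nrel).
move=> J0 /andP[regJ0 /existsP[s /existsP[t /andP[/forallP Hlow nrel]]]].
have [c J0c] := regE regJ0.
case/andP: regJ0 => _ /existsP[e /andP[eJ /eqP ee]].
move: nrel; rewrite negb_forall => /existsP[x]; rewrite negb_imply => /andP[xJ nx].
have ec : le mul e c by move: eJ; rewrite J0c (in_jclass mulA) => /andP[].
have xc : le mul x c by move: xJ; rewrite J0c (in_jclass mulA) => /andP[].
have cx : le mul c x by move: xJ; rewrite J0c (in_jclass mulA) => /andP[].
have ce : le mul c e by move: eJ; rewrite J0c (in_jclass mulA) => /andP[].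
have xe : le mul x e := le_trans mulA xc ce.
case/leP: xe => u [v xE].
pose y := rmul1 mul e v; pose w := lmul1 mul u e.
have wy : mul w y = x.
  by rewrite /w /y xE; clear xE y w; case: u => [a|]; case: v => [b|]; rewrite /= ?mulA -?(mulA _ e e) ?ee.
have ye : le mul y e by apply/leP; exists None, v.
have we : le mul w e by apply/leP; exists u, None.
exists (mul y s), (mul y t); split; last first.
  rewrite negb_forall; apply/existsP; exists w.
  have wJ : w \in J0.
    rewrite J0c (in_jclass mulA) (le_trans mulA we ec) /=.
    apply: (le_trans mulA cx); rewrite -wy; exact: le_mulr.
  by rewrite wJ /= !mulA wy.
move=> J /andP[regJ _] neq.
have [d Jd] := regE regJ.
case dc: (le mul d c).
  have rel : rm_rel mul J s t.
    apply: (implyP (Hlow J)); rewrite regJ /jlt neq andbT Jd J0c (jle_jclass mulA) //.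
  apply/forallP => z; apply/implyP => zJ.
  rewrite !mulA.
  have zd : le mul z d by move: zJ; rewrite Jd (in_jclass mulA) => /andP[].
  have ad : le mul (mul z y) d := le_trans mulA (le_mulr z y) zd.
  case aJ: (mul z y \in J).
    exact: (implyP (forallP rel (mul z y)) aJ).
  have nJ r : mul (mul z y) r \in J = false.
    apply/negbTE/negP; rewrite Jd => H.
    by move: aJ; rewrite Jd (up_jclass mulA (le_mulr _ _) ad H).
  by rewrite !nJ.
apply/forallP => z; apply/implyP => zJ.
have nJ r : mul z (mul y r) \in J = false.
  apply/negbTE/negP; rewrite Jd (in_jclass mulA) => /andP[_ H].
  move/negbT: dc => /negP; apply.
  apply: (le_trans mulA H); apply: (le_trans mulA (le_mull _ _)).
  apply: (le_trans mulA (le_mulr _ _)); apply: (le_trans mulA ye ec).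
by rewrite !nJ.
Qed.
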